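(* Let $x$ and $y$ be indeterminates that do not commute under multiplication (so $(x+y)^n$ is computed in the free associative algebra generated by $x$ and $y$), and let $n$ be a nonnegative integer. For $0\le k\le n$ and each $\lambda=(\lambda_1,\dots,\lambda_k)\in\mathcal{P}_{k,n-k}$, let $Q^\lambda x^{n-k}y^k$ denote the word obtained from the word $x^{n-k}y^k=\underbrace{x\cdots x}_{n-k}\underbrace{y\cdots y}_{k}$ by applying the product of transpositions $$Q^\lambda:=\prod_{j=1}^k (n-k+j,\; n-k+j-\lambda_j),$$ where applying the transposition $(i,j)$ to a word means swapping its $i$th and $j$th letters, and the factors are applied in the order $j=1$ first, then $j=2$, and so on up to $j=k$ (for $k=0$, $Q^\lambda$ is the identity). Then $$(x+y)^n=\sum_{k=0}^n\sum_{\lambda\in\mathcal{P}_{k,n-k}} Q^\lambda x^{n-k}y^k.$$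
   Context: For nonnegative integers $k$ and $m$, $\mathcal{P}_{k,m}$ denotes the set of integer tuples $(\lambda_1,\dots,\lambda_k)$ with $m\ge\lambda_1\ge\lambda_2\ge\cdots\ge\lambda_k\ge 0$, i.e. partitions with at most $k$ parts, each part at most $m$, padded with zeros to length $k$. ($\mathcal{P}_{0,m}$ consists of the single empty tuple.) For example, with $n-k=5$, $k=3$: $Q^{(3,1,0)}x^5y^3=(8,8)(7,6)(6,3)(xxxxxyyy)=xxyxxyxy$. *)

(* Defs.v *)
From mathcomp Require Import all_boot all_algebra.
Set Implicit Arguments. Unset Strict Implicit. Unset Printing Implicit Defensive.
Import GRing.Theory.
Local Open Scope ring_scope.

(* Words over the alphabet {x, y}: false = x, true = y. *)
Definition word := seq bool.

Definition xy_word (a b : nat) : word := nseq a false ++ nseq b true.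

(* Swap the letters at 1-based positions i and j of a word. *)
Definition swap_letters (w : word) (i j : nat) : word :=
  [seq nth false w (if l == i.-1 then j.-1 else if l == j.-1 then i.-1 else l)
  | l <- iota 0 (size w)].

Definition Q_apply (n k : nat) (lam : seq nat) : word :=
  foldl (fun w j => swap_letters w (n - k + j) (n - k + j - nth 0 lam j.-1))
        (xy_word (n - k) k) (iota 1 k).

(* Membership in P_{k,m} for a k-tuple with entries in {0..m}:
   m >= lambda_1 >= ... >= lambda_k >= 0. *)
Definition in_P (k m : nat) (t : k.-tuple 'I_m.+1) : bool :=
  sorted (fun a b => b <= a)%N (map val t).

Definition eval_word (R : pzRingType) (x y : R) (w : word) : R :=
  \prod_(b <- w) (if b then y else x).

(* Main.v *)
Require Import Defs.
From mathcomp Require Import all_boot all_algebra.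
From mathcomp Require Import zify.
Import GRing.Theory.
Set Implicit Arguments. Unset Strict Implicit.
Definition sq (m : nat) (lam : seq nat) (i : nat) : nat := m + i - nth 0 lam i.

Definition Wj n m lam j : word :=
  [seq has (fun i => sq m lam i == l) (iota 0 j) || (m + j <= l) | l <- iota 0 n].

Lemma has_iotaS (P : pred nat) j : has P (iota 0 j.+1) = has P (iota 0 j) || P j.
Proof. by rewrite -addn1 iotaD has_cat /= orbF. Qed.

Lemma Q_inv n k lam : k <= n ->
  (forall i, nth 0 lam i <= n - k) ->
  (forall i j, i <= j -> j < k -> nth 0 lam j <= nth 0 lam i) ->
  forall j, j <= k ->
  foldl (fun w j => swap_letters w (n - k + j) (n - k + j - nth 0 lam j.-1))
        (xy_word (n - k) k) (iota 1 j) = Wj n (n - k) lam j.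
Proof.
move=> kn Hb Hs; set m := n - k.
have nE : n = m + k by rewrite /m; lia.
elim=> [|j IH] jk.
  rewrite /= /Wj /xy_word /=.
  apply: (@eq_from_nth _ false).
    by rewrite size_cat !size_nseq size_map size_iota; lia.
  move=> l; rewrite size_cat !size_nseq => hl.
  have hl' : l < n by lia.
  rewrite (nth_map 0) ?size_iota // nth_iota // ?add0n ?addn0.
  rewrite nth_cat size_nseq; case: ltnP => hlm.
    by rewrite nth_nseq hlm.
  by rewrite nth_nseq; have -> : l - m < k by lia.
rewrite -[j.+1]addn1 iotaD foldl_cat IH; last lia.
rewrite addn1 /= add1n /=.
have hj : j < k by lia.
have lj := Hb j.
have Hlt : forall i, i < j -> sq m lam i < sq m lam j.
  move=> i ij; rewrite /sq; have := Hs i j (ltnW ij) hj; have := Hb i; lia.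
rewrite /swap_letters /Wj.
apply: (@eq_from_nth _ false).
  by rewrite !size_map !size_iota.
move=> l; rewrite !size_map !size_iota => hl.
rewrite (nth_map 0) ?size_iota // nth_iota // add0n.
have e1 : (m + j.+1).-1 = m + j by lia.
have e2 : (m + j.+1 - nth 0 lam j).-1 = sq m lam j by rewrite /sq; lia.
rewrite add0n e1 e2.
rewrite [RHS](nth_map 0) ?size_iota // nth_iota // add0n has_iotaS.
case: (eqVneq l (m + j)) => [->|hne].
  rewrite (nth_map 0) ?size_iota; last (rewrite /sq; lia).
  rewrite nth_iota; last (rewrite /sq; lia).
  rewrite add0n.
  case: (eqVneq (sq m lam j) (m + j)) => [->|hne2].
    by rewrite leqnn orbT.
  have -> : has (fun i => sq m lam i == sq m lam j) (iota 0 j) = false.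
    apply/negbTE/hasPn => i; rewrite mem_iota add0n => /andP[_ ij].
    by have := Hlt i ij; lia.

  have -> : has (fun i => sq m lam i == m + j) (iota 0 j) = false.
    apply/negbTE/hasPn => i; rewrite mem_iota add0n => /andP[_ ij].
    have := Hlt i ij; rewrite /sq in hne2 *; lia.
  by rewrite /=; apply/idP/idP; rewrite /sq in hne2 *; lia.
case: (eqVneq l (sq m lam j)) => [->|hne2].
  rewrite (nth_map 0) ?size_iota; last lia.
  rewrite nth_iota; last lia.
  by rewrite add0n leqnn !orbT.
rewrite (nth_map 0) ?size_iota // nth_iota // add0n.
rewrite orbF.
congr (_ || _); apply/idP/idP; lia.
Qed.
Definition ps n (f : {ffun 'I_n -> bool}) : seq nat := [seq val l | l <- enum 'I_n & f l].

Definition hh n k (t : k.-tuple 'I_(n - k).+1) : {ffun 'I_n -> bool} :=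
  [ffun l : 'I_n => has (fun i => sq (n - k) (map val t) i == val l) (iota 0 k)].

Definition gg n k (f : {ffun 'I_n -> bool}) : k.-tuple 'I_(n - k).+1 :=
  [tuple inord (n - k + i - nth 0 (ps f) i) | i < k].

Lemma nth_val_tuple p k (t : k.-tuple 'I_p.+1) i (hi : i < k) :
  nth 0 (map val t) i = val (tnth t (Ordinal hi)).
Proof. by rewrite (tnth_nth ord0) (nth_map ord0) ?size_tuple. Qed.

Lemma nth_val_le p k (t : k.-tuple 'I_p.+1) i : nth 0 (map val t) i <= p.
Proof.
case: (ltnP i k) => hi; first by rewrite (nth_val_tuple t hi) -ltnS ltn_ord.
by rewrite nth_default // size_map size_tuple.
Qed.

Lemma mem_ps n (f : {ffun 'I_n -> bool}) (l : 'I_n) : (val l \in ps f) = f l.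
Proof. by rewrite /ps (mem_map val_inj) mem_filter mem_enum andbT. Qed.

Lemma ps_lt n (f : {ffun 'I_n -> bool}) x : x \in ps f -> x < n.
Proof. by rewrite /ps => /mapP [l _ ->]; apply: ltn_ord. Qed.

Lemma ps_sorted n (f : {ffun 'I_n -> bool}) : sorted ltn (ps f).
Proof.
rewrite /ps sorted_map; apply: sorted_filter.
  by move=> a b c /=; apply: ltn_trans.
by rewrite -sorted_map val_enum_ord iota_ltn_sorted.
Qed.

Lemma size_ps n (f : {ffun 'I_n -> bool}) : size (ps f) <= n.
Proof. by rewrite size_map size_filter -[X in _ <= X]size_enum_ord count_size. Qed.

Lemma gap s : sorted ltn s -> forall i d, i + d < size s -> nth 0 s i + d <= nth 0 s (i + d).
Proof.
move=> /(sortedP 0) H i; elim=> [|d IH] h; first by rewrite !addn0.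
have h' : i + d < size s by lia.
have := IH h'.
have h2 : (i + d).+1 < size s by lia.
have := H (i + d) h2.
move=> /= A B; rewrite !addnS; lia.
Qed.

Lemma ps_bounds n k (f : {ffun 'I_n -> bool}) : size (ps f) = k ->
  forall i, i < k -> i <= nth 0 (ps f) i <= n - k + i.
Proof.
move=> sz i hi; have so := ps_sorted f.
have kn : k <= n by rewrite -sz size_ps.
have g1 := @gap _ so 0 i; rewrite add0n sz in g1; have {}g1 := g1 hi.
have g2 := @gap _ so i (k.-1 - i).
have e : i + (k.-1 - i) = k.-1 by lia.
have hk : k.-1 < size (ps f) by lia.
rewrite e in g2; have {}g2 := g2 hk.
have : nth 0 (ps f) k.-1 < n.
  apply: ps_lt; apply: mem_nth; rewrite sz; lia.
lia.
Qed.

Lemma nth_gg n k (f : {ffun 'I_n -> bool}) : size (ps f) = k ->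
  forall i, i < k -> nth 0 (map val (gg k f)) i = n - k + i - nth 0 (ps f) i.
Proof.
move=> sz i hi; rewrite (nth_val_tuple _ hi) tnth_mktuple /= inordK //.
have := ps_bounds sz hi; lia.
Qed.

Lemma has_nth_iota s x :
  has (fun i => nth 0 s i == x) (iota 0 (size s)) = (x \in s).
Proof.
rewrite -[in RHS](mkseq_nth 0 s) /mkseq -has_pred1 has_map.
by apply: eq_has => i /=; rewrite eq_sym.
Qed.

Lemma hg n k (f : {ffun 'I_n -> bool}) : size (ps f) = k -> hh (gg k f) = f.
Proof.
move=> sz; apply/ffunP => l; rewrite ffunE -mem_ps -has_nth_iota sz.
apply: eq_in_has => i; rewrite mem_iota add0n => /andP[_ hi] /=.
rewrite /sq nth_gg //.
have := ps_bounds sz hi.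
by move=> H; congr (_ == _); lia.
Qed.

Lemma Pg n k (f : {ffun 'I_n -> bool}) : size (ps f) = k -> in_P (gg k f).
Proof.
move=> sz; rewrite /in_P; apply/(sortedP 0) => i; rewrite size_map size_tuple => hi.
rewrite !nth_gg //; last by lia.
have := ps_bounds sz hi; have := ps_bounds sz (ltnW hi).
have := @gap _ (ps_sorted f) i 1; rewrite sz addn1 => /(_ hi).
lia.
Qed.

Lemma lam_sorted p k (t : k.-tuple 'I_p.+1) : in_P t ->
  forall i j, i <= j -> j < k -> nth 0 (map val t) j <= nth 0 (map val t) i.
Proof.
rewrite /in_P => so i j; rewrite leq_eqVlt => /orP[/eqP -> //|ij] jk.
have := sorted_ltn_nth _ 0 so.
move=> /(_ _) H; apply: H => //; last by rewrite inE size_map size_tuple.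
  by move=> a b c /= h1 h2; apply: leq_trans h2 h1.
by rewrite inE size_map size_tuple; apply: ltn_trans ij jk.
Qed.

Lemma sq_lt n k (t : k.-tuple 'I_(n - k).+1) : in_P t ->
  forall i j, i < j -> j < k -> sq (n - k) (map val t) i < sq (n - k) (map val t) j.
Proof.
move=> P i j ij jk; rewrite /sq.
have := lam_sorted P (ltnW ij) jk; have := nth_val_le t i; lia.
Qed.

Lemma hps n k (t : k.-tuple 'I_(n - k).+1) : k <= n -> in_P t ->
  ps (hh t) = mkseq (sq (n - k) (map val t)) k.
Proof.
move=> kn P; apply: (irr_sorted_eq ltn_trans ltnn).
- exact: ps_sorted.
- apply/(sortedP 0) => i; rewrite size_mkseq => hi.
  by rewrite !nth_mkseq //; [apply: sq_lt | apply: ltnW].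
move=> x; case: (boolP (x < n)) => hx.
  pose l := Ordinal hx; have -> : x = val l by [].
  rewrite mem_ps ffunE /mkseq -has_pred1 has_map.
  by apply: eq_has => i /=; rewrite eq_sym.
have -> : (x \in ps (hh t)) = false by apply/negbTE/negP => /ps_lt; lia.
apply/esym/negbTE/negP => /mapP [i]; rewrite mem_iota add0n => /andP[_ hi] xe.
move: hx; rewrite xe /sq; lia.
Qed.

Lemma gh n k (t : k.-tuple 'I_(n - k).+1) : k <= n -> in_P t -> gg k (hh t) = t.
Proof.
move=> kn P; apply: eq_from_tnth => i; apply: val_inj.
rewrite tnth_mktuple /= hps // nth_mkseq // /sq.
have H := nth_val_le t i.
rewrite (nth_val_tuple t (ltn_ord i)) in H *.
have E : Ordinal (ltn_ord i) = i by apply: val_inj.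
rewrite E in H *.
rewrite inordK; last lia.
have V : val (tnth t i) = nat_of_ord (tnth t i) by [].
rewrite V in H *; lia.
Qed.
Local Open Scope ring_scope.
Lemma step1 (R : pzRingType) (x y : R) (n : nat) :
  (x + y) ^+ n = \sum_(f : {ffun 'I_n -> bool}) \prod_(i < n) (if f i then y else x).
Proof.
have := bigA_distr_bigA (fun (i : 'I_n) (b : bool) => if b then y else x).
move=> <-.
rewrite -[in LHS](card_ord n) -prodr_const.
apply: eq_bigr => i _.
by rewrite big_bool /= addrC.
Qed.

Lemma eval_h (R : pzRingType) (x y : R) n k (t : k.-tuple 'I_(n - k).+1) :
  (k <= n)%N -> in_P t ->
  eval_word x y (Q_apply n k (map val t)) = \prod_(i < n) (if hh t i then y else x).
Proof.
move=> kn P.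
rewrite /Q_apply (@Q_inv n k (map val t) kn (nth_val_le t) (lam_sorted P) k (leqnn k)) /Wj /eval_word big_map.
have -> : iota 0 n = index_iota 0 n by rewrite /index_iota subn0.
rewrite big_mkord.
apply: eq_bigr => i _; rewrite ffunE.
have -> : (n - k + k <= i)%N = false by have := ltn_ord i; lia.
by rewrite orbF.
Qed.

Lemma main_k (R : pzRingType) (x y : R) (n k : nat) : (k <= n)%N ->
  \sum_(t : k.-tuple 'I_(n - k).+1 | in_P t) eval_word x y (Q_apply n k (map val t)) =
  \sum_(f : {ffun 'I_n -> bool} | (size (ps f) == k)%N) \prod_(i < n) (if f i then y else x).
Proof.
move=> kn.
rewrite [RHS](reindex_onto (@hh n k) (gg k)) => [|f /eqP sz]; last exact: hg.
apply: eq_big => t; last by move=> P; apply: eval_h.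
case P: (in_P t).
  by rewrite hps // size_mkseq eqxx gh // eqxx.
apply/esym/negP => /andP[/eqP sz /eqP e].
by move: P; rewrite -e Pg.
Qed.

Theorem theorem1 (R : pzRingType) (x y : R) (n : nat) :
  (x + y) ^+ n =
  \sum_(k < n.+1)
     \sum_(t : k.-tuple 'I_(n - k).+1 | in_P t)
        eval_word x y (Q_apply n k (map val t)).
Proof.
rewrite step1 (partition_big (fun f : {ffun 'I_n -> bool} => (inord (size (ps f)) : 'I_n.+1)) xpredT) //.
apply: eq_bigr => k _.
rewrite main_k; last by rewrite -ltnS ltn_ord.
apply: eq_bigl => f /=.
have hs : (size (ps f) < n.+1)%N by rewrite ltnS size_ps.
apply/eqP/eqP => [<-|E]; first by rewrite inordK.
by apply: val_inj; rewrite /= inordK.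
Qed.
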